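(* Let $G$ be a mixed abelian group in which every subgroup is an essential subgroup of some direct summand of $G$. Then $G = D \oplus R$, where $D$ is a divisible group and $R$ is a reduced torsion-free group.
   Context: All groups are additively written abelian groups; a mixed group contains both non-zero elements of finite order and elements of infinite order. A subgroup $H$ of a group $A$ is essential in $A$ if $H \cap S \neq \{0\}$ for every non-zero subgroup $S$ of $A$. *)

(* Defs.v *)
(* an abelian group (possibly infinite) is a zmodType;
   subgroups are Prop-valued predicates closed under 0 and subtraction. *)
From mathcomp Require Import all_boot all_algebra.
Set Implicit Arguments. Unset Strict Implicit. Unset Printing Implicit Defensive.
Import GRing.Theory.
Local Open Scope ring_scope.

Section AbGroups.
Variable G : zmodType.

Definition is_subgroup (H : G -> Prop) : Prop :=
  H 0 /\ (forall x y, H x -> H y -> H (x - y)).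

Definition subset (A B : G -> Prop) : Prop := forall x, A x -> B x.

Definition internal_direct_sum (A B : G -> Prop) : Prop :=
  is_subgroup A /\ is_subgroup B /\
  (forall x, A x -> B x -> x = 0) /\
  (forall g, exists a b, A a /\ B b /\ g = a + b).

Definition direct_summand (S : G -> Prop) : Prop :=
  exists T : G -> Prop, internal_direct_sum S T.

Definition essential_in (H A : G -> Prop) : Prop :=
  is_subgroup H /\ is_subgroup A /\ subset H A /\
  (forall S : G -> Prop, is_subgroup S -> subset S A ->
     (exists s, S s /\ s <> 0) -> exists x, H x /\ S x /\ x <> 0).

Definition finite_order (x : G) : Prop := exists n : nat, (0 < n)%N /\ x *+ n = 0.

Definition mixed_group : Prop :=
  (exists x : G, x <> 0 /\ finite_order x) /\ (exists y : G, ~ finite_order y).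

Definition divisible (D : G -> Prop) : Prop :=
  forall d, D d -> forall n : nat, (0 < n)%N -> exists e, D e /\ e *+ n = d.

Definition reduced (R : G -> Prop) : Prop :=
  forall D : G -> Prop, is_subgroup D -> subset D R -> divisible D ->
    forall x, D x -> x = 0.

Definition torsion_free (R : G -> Prop) : Prop :=
  forall x, R x -> forall n : nat, (0 < n)%N -> x *+ n = 0 -> x = 0.

End AbGroups.

(* Main.v *)
Require Import Defs.
From mathcomp Require Import all_boot all_algebra.
From Stdlib Require Import Classical.
Set Implicit Arguments. Unset Strict Implicit.
Import GRing.Theory.
Local Open Scope ring_scope.

Section Aux.
Variable G : zmodType.

Lemma fo0 : finite_order (0 : G).
Proof. by exists 1%N; rewrite mul0rn. Qed.

Lemma foB (x y : G) : finite_order x -> finite_order y -> finite_order (x - y).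
Proof.
move=> [n [n0 hn]] [m [m0 hm]]; exists (n * m)%N; split; first by rewrite muln_gt0 n0.
by rewrite mulrnBl mulrnA hn mul0rn mulnC mulrnA hm mul0rn subr0.
Qed.

Lemma foN (x : G) : finite_order x -> finite_order (- x).
Proof. by move=> h; rewrite -sub0r; apply: foB => //; apply: fo0. Qed.

Lemma foD (x y : G) : finite_order x -> finite_order y -> finite_order (x + y).
Proof. by move=> hx hy; rewrite -(opprK y); apply: foB => //; apply: foN. Qed.

Lemma foMn (x : G) k : (0 < k)%N -> finite_order (x *+ k) -> finite_order x.
Proof.
move=> k0 [n [n0 hn]]; exists (k * n)%N; split; first by rewrite muln_gt0 k0.
by rewrite mulrnA.
Qed.

Lemma foMn' (x : G) k : finite_order x -> finite_order (x *+ k).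
Proof.
move=> [n [n0 hn]]; exists n; split => //.
by rewrite -mulrnA mulnC mulrnA hn mul0rn.
Qed.

Definition cyc (x : G) : G -> Prop := fun g => exists i : int, g = x *~ i.

Lemma cyc_sub x : is_subgroup (cyc x).
Proof.
split; first by exists 0; rewrite mulr0z.
by move=> a b [i ->] [j ->]; exists (i - j); rewrite mulrzBr.
Qed.

Lemma cyc_nz x h : cyc x h -> h <> 0 ->
  exists k, (0 < k)%N /\ (h = x *+ k \/ h = - (x *+ k)).
Proof.
move=> [[n|n] ->] hn.
- exists n; split; last by left.
  by case: n hn => // hn; rewrite /= mulr0n in hn.
- by exists n.+1; split => //; right.
Qed.

Definition tor : G -> Prop := fun x => finite_order x.

Lemma tor_sub : is_subgroup tor.
Proof. split; [exact: fo0| move=> x y; exact: foB]. Qed.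

End Aux.


Section Aux2.
Variable G : zmodType.
Lemma subN (S : G -> Prop) x : is_subgroup S -> S x -> S (- x).
Proof. by move=> [h0 hB] hx; rewrite -sub0r; apply: hB. Qed.
Lemma subD (S : G -> Prop) x y : is_subgroup S -> S x -> S y -> S (x + y).
Proof. move=> hS hx hy; rewrite -(opprK y); have hN := subN hS hy; case: hS => _ hB; exact: hB. Qed.
Lemma subMn (S : G -> Prop) x n : is_subgroup S -> S x -> S (x *+ n).
Proof.
move=> hS hx; elim: n => [|n ih]; first by rewrite mulr0n; case: hS.
by rewrite mulrSr; apply: subD.
Qed.
Lemma subMz (S : G -> Prop) x i : is_subgroup S -> S x -> S (x *~ i).
Proof. by move=> hS hx; case: i => n /=; [apply: subMn | apply: subN => //; apply: subMn]. Qed.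
End Aux2.

Theorem corollary2p16 (G : zmodType) :
  mixed_group G ->
  (forall H : G -> Prop, is_subgroup H ->
     exists S : G -> Prop, direct_summand S /\ essential_in H S) ->
  exists D R : G -> Prop,
    internal_direct_sum D R /\ divisible D /\ reduced R /\ torsion_free R.
Proof.
move=> [_ [y hy]] hyp.
have Tdiv : divisible (@tor G).
  move=> t ht m m0; apply: NNPP => hne.
  have [S [[C [Ss [Cs [SC dec]]]] [_ [_ [HS ess]]]]] :=
    hyp _ (cyc_sub (y *+ m + t)).
  have TC : forall x, finite_order x -> C x.
    move=> x hx; have [s [c [hs [hc ex]]]] := dec x.
    have [n [n0 hn]] := hx.
    have sn : s *+ n = 0.
      apply: SC; first exact: subMn.
      have -> : s *+ n = - (c *+ n) by rewrite ex mulrnDl in hn; apply/eqP; rewrite -addr_eq0 hn.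
      by apply: subN => //; apply: subMn.
    case: (classic (s = 0)) => [s0|sn0]; first by rewrite ex s0 add0r.
    exfalso.
    have cS : Defs.subset (cyc s) S by move=> g [i ->]; exact: subMz.
    have [h [hH [hs' hn0]]] := ess (cyc s) (cyc_sub s) cS
      (ex_intro _ s (conj (ex_intro _ 1 (esym (mulr1z s))) sn0)).
    have htor : finite_order h.
      have [k [k0 [->| ->]]] := cyc_nz hs' hn0.
        by apply: foMn'; exists n.
      by apply: foN; apply: foMn'; exists n.
    have [k [k0 hk]] := cyc_nz hH hn0.
    have : finite_order (y *+ m + t *+ 1) .
      apply: (foMn k0); case: hk => hk; first by rewrite mulr1n -hk.
      by rewrite mulr1n -(opprK (_ *+ k)) -hk; apply: foN.
    rewrite mulr1n => hyt.
    apply: hy; apply: (foMn m0).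
    by have := foB hyt ht; rewrite addrK.
  have [s' [c [hs' [hc ey]]]] := dec y.
  have e0 : c *+ m + t = 0.
    apply: SC.
      have -> : c *+ m + t = (y *+ m + t) - s' *+ m.
        by rewrite ey mulrnDl addrAC [s' *+ m + _]addrC addrK.
      have h1 : S (y *+ m + t) by apply: HS; exists 1; rewrite mulr1z.
      have h2 : S (s' *+ m) by apply: subMn.
      by case: Ss => _ hB; apply: hB.
    by apply: subD => //; [apply: subMn | apply: TC].
  apply: hne; exists (- c); split; last first.
    by rewrite mulNrn; apply/eqP; rewrite eqr_oppLR -addr_eq0 e0.
  apply: foN; apply: (foMn m0).
  have -> : c *+ m = - t by apply/eqP; rewrite -addr_eq0 e0.
  exact: foN.
pose Dm : G -> Prop := fun x => exists D, is_subgroup D /\ divisible D /\ D x.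
have DmT : forall x, finite_order x -> Dm x.
  by move=> x hx; exists (@tor G); split; [exact: tor_sub | split].
have Dmsub : is_subgroup Dm.
  split; first by apply: DmT; exact: fo0.
  move=> a b [D1 [s1 [d1 h1]]] [D2 [s2 [d2 h2]]].
  exists (fun z => exists u v, D1 u /\ D2 v /\ z = u + v); split; last first.
    split; last by exists a, (- b); split => //; split => //; apply: subN.
    move=> z [u [v [hu [hv ->]]]] n n0.
    have [eu [heu eun]] := d1 u hu n n0.
    have [ev [hev evn]] := d2 v hv n n0.
    by exists (eu + ev); split; [exists eu, ev | rewrite mulrnDl eun evn].
  split; first by exists 0, 0; split; [case: s1 | split; [case: s2 | rewrite addr0]].
  move=> z w [u [v [hu [hv ->]]]] [u' [v' [hu' [hv' ->]]]].
  exists (u - u'), (v - v'); split; first by case: s1 => _ hB; apply: hB.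
  split; first by case: s2 => _ hB; apply: hB.
  by rewrite opprD addrACA.
have Dmdiv : forall d, Dm d -> forall n, (0 < n)%N -> exists e, Dm e /\ e *+ n = d.
  move=> d [D [sD [dD hd]]] n n0; have [e [he en]] := dD d hd n n0.
  by exists e; split => //; exists D.
have [S [[C [Ss [Cs [SC dec]]]] [_ [_ [HS ess]]]]] := hyp _ Dmsub.
have SDm : forall x, S x -> Dm x.
  move=> x hx; case: (classic (x = 0)) => [->|xn0]; first by case: Dmsub.
  have cS : Defs.subset (cyc x) S by move=> g [i ->]; exact: subMz.
  have [h [hH [hx' hn0]]] := ess (cyc x) (cyc_sub x) cS
    (ex_intro _ x (conj (ex_intro _ 1 (esym (mulr1z x))) xn0)).
  have [k [k0 hk]] := cyc_nz hx' hn0.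
  have hxk : Dm (x *+ k).
    by case: hk => hk; [rewrite -hk | rewrite -(opprK (_ *+ k)) -hk; apply: subN].
  have [e [he ek]] := Dmdiv _ hxk k k0.
  have hxe : Dm (x - e).
    apply: DmT; exists k; split => //; by rewrite mulrnBl ek subrr.
  by have := subD Dmsub hxe he; rewrite subrK.
exists S, C; split; first by split.
split.
  move=> d hd n n0; have [e [he en]] := Dmdiv d (SDm d hd) n n0.
  by exists e; split => //; apply: HS.
split.
  move=> D sD DC dD x hx; apply: SC; last exact: DC.
  by apply: HS; exists D.
move=> x hx n n0 hn; apply: SC => //; apply: HS; apply: DmT; by exists n.
Qed.
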